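(* In the setting described in the context, for each $t$: if $\theta_{t-1}\ge0$, then $p^+_t(\theta_{t-1})\,p^-_t(\theta_{t-1})=0$, i.e. the policy does not charge and discharge simultaneously; equivalently, simultaneous charging and discharging under the policy requires the Lagrangian dual $\theta_{t-1}$ to be negative.
   Context: Efficiency $\eta\in(0,1]$, power limit $P>0$. $O_t:\mathbb{R}\to\mathbb{R}$ convex with (nondecreasing) derivative $o_t$. Define $\varphi_t(x)=\sup\{y\in\mathbb{R}: o_t(y)\le x\}$, $[x]^y_z=\max\{\min\{x,y\},z\}$, and for $x\in\mathbb{R}$ the discharge and charge components $p^+_t(x)=[\varphi_t(-x/\eta)]^P_0$, $p^-_t(x)=[-\varphi_t(-x\eta)]^P_0$. Here $\theta_{t-1}$ is the Lagrange multiplier of the state-of-charge dynamics constraint $e_t-e_{t-1}=-p_t^+/\eta+p_t^-\eta$ in the storage control problem of minimizing $\sum_t O_t(p_t)+C_T(e_T)$ subject to $p_t=p^+_t-p^-_t$, $0\le p^\pm_t\le P$, $0\le e_t\le E$. *)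

(* Defs.v *)
From HB Require Import structures.
From mathcomp Require Import all_boot all_order all_algebra.
From mathcomp Require Import all_classical all_reals all_analysis.
Set Implicit Arguments. Unset Strict Implicit. Unset Printing Implicit Defensive.
Import Order.TTheory GRing.Theory Num.Theory.
Import numFieldNormedType.Exports.
Local Open Scope classical_set_scope.
Local Open Scope ring_scope.

(* varphi_t(x) = sup { y in R : o_t(y) <= x }, taken in the extended reals
   (sup of the empty set is -oo, of an unbounded set +oo). *)
Definition varphi (R : realType) (o : R -> R) (x : R) : \bar R :=
  ereal_sup [set (y%:E) | y in [set y : R | o y <= x]].

Definition clip (R : realType) (x : \bar R) (y z : R) : R :=
  fine (maxe (mine x y%:E) z%:E).

Definition pplus (R : realType) (o : R -> R) (eta P x : R) : R :=
  clip (varphi o (- x / eta)) P 0.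

Definition pminus (R : realType) (o : R -> R) (eta P x : R) : R :=
  clip (- varphi o (- x * eta))%E P 0.

(* Main.v *)
Require Import Defs.
From HB Require Import structures.
From mathcomp Require Import all_boot all_order all_algebra.
From mathcomp Require Import all_classical all_reals all_analysis.
Import Order.TTheory GRing.Theory Num.Theory.
Import numFieldNormedType.Exports.
Local Open Scope ring_scope.

Lemma clip0 (R : realType) (x : \bar R) (P : R) : 0 < P -> (x <= 0)%E -> clip x P 0 = 0.
Proof.
move=> hP hx; rewrite /clip.
have h1 : (mine x P%:E <= 0%:E)%E by rewrite ge_min hx.
by rewrite (max_r h1).
Qed.

Lemma varphi_mono (R : realType) (o : R -> R) (a b : R) : a <= b ->
  (varphi o a <= varphi o b)%E.
Proof.
move=> ab; apply: ereal_sup_le => _ [y /= hy <-]; exists y => //=.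
exact: le_trans hy ab.
Qed.

Theorem proposition2 (R : realType) (eta P : R) (O o : nat -> R -> R)
  (theta : nat -> R) (t : nat) :
  (0 < t)%N -> 0 < eta -> eta <= 1 -> 0 < P ->
  (forall s (x y l : R), 0 <= l -> l <= 1 ->
     O s (l * x + (1 - l) * y) <= l * O s x + (1 - l) * O s y) ->
  (forall s (x : R), is_derive x 1 (O s) (o s x)) ->
  (forall s, {homo o s : x y / x <= y}) ->
  0 <= theta t.-1 ->
  pplus (o t) eta P (theta t.-1) * pminus (o t) eta P (theta t.-1) = 0.
Proof.
move=> _ he he1 hP _ _ _ hth.
set th := theta t.-1 in hth *.
have hab : - th / eta <= - th * eta.
  rewrite mulNr mulNr lerN2 ler_pdivlMr //.
  rewrite -mulrA; apply: ler_piMr => //; apply: mulr_ile1 => //; exact: ltW.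
have hm := @varphi_mono R (o t) _ _ hab.
rewrite /pplus /pminus.
case: (leP (varphi (o t) (- th / eta)) 0%E) => h.
  by rewrite (@clip0 R _ P hP h) mul0r.
have h2 : (- varphi (o t) (- th * eta) <= 0)%E.
  rewrite oppe_le0; exact: ltW (lt_le_trans h hm).
by rewrite (@clip0 R _ P hP h2) mulr0.
Qed.
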